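(* Let $r\in\mathbb{N}_0$, $m\in\mathbb{N}$ with $k:=m-r\ge 2$, and let $x_0\le x_1\le\dots\le x_m$ be real numbers with $x_j<x_{j+r+1}$ for all $0\le j\le m-r-1$; put $d:=2(x_m-x_0)$. If $\varphi,\omega\in\Phi$ satisfy \[ \varphi(t)\le t^{k-1}\int_t^{d}u^{-k}\omega(u)\,du,\quad t\in(0,d/2],\qquad\text{and}\qquad \varphi(t)\le\omega(t),\quad t\in[d/2,d], \] then \[ \Lambda_r(x_0,\dots,x_{m-1};\varphi)\le c\,(x_m-x_0)\Lambda_r(x_0,\dots,x_m;\omega) \quad\text{and}\quad \Lambda_r(x_1,\dots,x_{m};\varphi)\le c\,(x_m-x_0)\Lambda_r(x_0,\dots,x_m;\omega), \] where the constants $c$ depend only on $k$.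
   Context: $\Phi$ denotes the set of nondecreasing functions $\varphi\in C[0,\infty]$ with $\varphi(0)=0$. For an ordered tuple $y_0\le\dots\le y_n$ (here applied with $n=m$ and $n=m-1$, each tuple with its own endpoints): $\mathcal{Q}_{n,r}:=\{(p,q):0\le p,q\le n,\ q-p\ge r+1\}$, $y_{-1}:=y_0-(y_n-y_0)$, $y_{n+1}:=y_n+(y_n-y_0)$, $d(p,q):=\min\{y_{q+1}-y_p,y_q-y_{p-1}\}$, and for $\varphi\in\Phi$, $\Lambda_{p,q,r}(y_0,\dots,y_n;\varphi):=\frac{\int_{y_q-y_p}^{d(p,q)}u^{p+r-q-1}\varphi(u)du}{\prod_{i=0}^{p-1}(y_q-y_i)\prod_{i=q+1}^{n}(y_i-y_p)}$ (empty products $=1$), $\Lambda_r(y_0,\dots,y_n;\varphi):=\max_{(p,q)\in\mathcal{Q}_{n,r}}\Lambda_{p,q,r}(y_0,\dots,y_n;\varphi)$. *)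

(* Defs.v *)
From Stdlib Require Import Reals Lra Lia List.
From Coquelicot Require Import Coquelicot.
Import ListNotations.
Open Scope R_scope.

Definition inPhi (phi : R -> R) : Prop :=
  (forall s t, 0 <= s -> s <= t -> phi s <= phi t) /\
  (forall t, 0 <= t ->
     filterlim phi (within (fun u => 0 <= u) (locally t)) (locally (phi t))) /\
  phi 0 = 0.

(* A tuple y_0 <= ... <= y_n is given by y : nat -> R together with n. *)

(* y_{p-1} with the convention y_{-1} := y_0 - (y_n - y_0) *)
Definition y_prev (y : nat -> R) (n p : nat) : R :=
  match p with
  | O => y 0%nat - (y n - y 0%nat)
  | S p' => y p'
  end.

(* y_{q+1} with the convention y_{n+1} := y_n + (y_n - y_0) *)
Definition y_next (y : nat -> R) (n q : nat) : R :=
  if Nat.eqb q n then y n + (y n - y 0%nat) else y (S q).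

Definition dpq (y : nat -> R) (n p q : nat) : R :=
  Rmin (y_next y n q - y p) (y q - y_prev y n p).

Definition Qset (n r : nat) : list (nat * nat) :=
  filter (fun pq => Nat.leb (fst pq + r + 1) (snd pq))
    (flat_map (fun p => map (fun q => (p, q)) (seq 0 (S n))) (seq 0 (S n))).

Definition Lambda_pqr (y : nat -> R) (n p q r : nat) (phi : R -> R) : R :=
  RInt (fun u => powerRZ u (Z.of_nat p + Z.of_nat r - Z.of_nat q - 1)%Z * phi u)
       (y q - y p) (dpq y n p q)
  / (fold_right Rmult 1 (map (fun i => y q - y i) (seq 0 p)) *
     fold_right Rmult 1 (map (fun i => y i - y p) (seq (S q) (n - q)))).

(* Maximum over Q_{n,r} (which is nonempty whenever n >= r + 1, the only
   case used below; all Lambda_pqr are then >= 0). *)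
Definition Lambda_r (y : nat -> R) (n r : nat) (phi : R -> R) : R :=
  fold_right Rmax 0 (map (fun pq => Lambda_pqr y n (fst pq) (snd pq) r phi) (Qset n r)).

(* Main.v *)
Require Import Defs.
From Stdlib Require Import Reals Lra Lia List.
From Coquelicot Require Import Coquelicot.
Open Scope R_scope.

Lemma phi_cont f z : inPhi f -> 0 < z -> continuous f z.
Proof.
  intros [_ [Hc _]] Hz P HP.
  specialize (Hc z (Rlt_le _ _ Hz) P HP).
  assert (HD : locally z (fun u => 0 <= u)).
  { exists (mkposreal z Hz). intros y Hy. unfold ball in Hy; simpl in Hy.
    unfold AbsRing_ball, abs, minus, plus, opp in Hy; simpl in Hy.
    apply Rabs_lt_between in Hy. lra. }
  unfold filtermap, within in Hc |- *.
  generalize (filter_and _ _ Hc HD). apply filter_imp. intros x [H1 H2]. now apply H1.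
Qed.

Lemma phi_nonneg f t : inPhi f -> 0 <= t -> 0 <= f t.
Proof. intros [Hm [_ H0]] Ht. rewrite <- H0. apply Hm; lra. Qed.

Lemma phi_mono f s t : inPhi f -> 0 <= s -> s <= t -> f s <= f t.
Proof. intros [Hm _] ??. now apply Hm. Qed.

Lemma cont_invpow n z : 0 < z -> continuous (fun v => / v ^ n) z.
Proof.
  intros Hz. apply (@ex_derive_continuous R_AbsRing R_NormedModule). auto_derive. apply pow_nonzero. lra.
Qed.

Lemma cont_w n f z : inPhi f -> 0 < z -> continuous (fun v => / v ^ n * f v) z.
Proof.
  intros Hf Hz. apply (continuous_mult (fun v => / v ^ n) f).
  now apply cont_invpow. now apply phi_cont.
Qed.

Lemma exR n f a b : inPhi f -> 0 < a -> a <= b -> ex_RInt (fun v => / v ^ n * f v) a b.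
Proof.
  intros Hf Ha Hab. apply (@ex_RInt_continuous R_CompleteNormedModule). intros z Hz.
  rewrite Rmin_left in Hz by lra. apply cont_w; auto; lra.
Qed.

Lemma w_nonneg n f v : inPhi f -> 0 < v -> 0 <= / v ^ n * f v.
Proof.
  intros Hf Hv. apply Rmult_le_pos. left; apply Rinv_0_lt_compat, pow_lt; lra.
  apply phi_nonneg; auto; lra.
Qed.

Lemma RInt_w_nonneg n f a b : inPhi f -> 0 < a -> a <= b -> 0 <= RInt (fun v => / v ^ n * f v) a b.
Proof.
  intros Hf Ha Hab. apply RInt_ge_0; auto. now apply exR.
  intros x Hx. apply w_nonneg; auto; lra.
Qed.

Lemma RInt_w_chasles n f a b c : inPhi f -> 0 < a -> a <= b -> b <= c ->
  RInt (fun v => / v ^ n * f v) a c = RInt (fun v => / v ^ n * f v) a b + RInt (fun v => / v ^ n * f v) b c.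
Proof.
  intros Hf Ha Hab Hbc. rewrite <- (RInt_Chasles _ a b c); try (apply exR; auto; lra). reflexivity.
Qed.

Lemma RInt_w_sub n f a b c d : inPhi f -> 0 < a -> a <= c -> c <= d -> d <= b ->
  RInt (fun v => / v ^ n * f v) c d <= RInt (fun v => / v ^ n * f v) a b.
Proof.
  intros Hf Ha Hac Hcd Hdb.
  rewrite (RInt_w_chasles n f a c b), (RInt_w_chasles n f c d b) by (auto; lra).
  assert (0 <= RInt (fun v => / v ^ n * f v) a c) by (apply RInt_w_nonneg; auto).
  assert (0 <= RInt (fun v => / v ^ n * f v) d b) by (apply RInt_w_nonneg; auto; lra).
  lra.
Qed.

Definition prodl (l : list R) := fold_right Rmult 1 l.

Lemma prodl_app l1 l2 : prodl (l1 ++ l2) = prodl l1 * prodl l2.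
Proof. induction l1; simpl. ring. unfold prodl in *; simpl; rewrite IHl1; ring. Qed.

Lemma prod_ge (f : nat -> R) l b : 0 <= b -> (forall i, In i l -> b <= f i) ->
  b ^ length l <= prodl (map f l).
Proof.
  intros Hb; induction l as [|a l IH]; simpl; intros H. lra.
  apply Rmult_le_compat; auto. apply pow_le; auto.
Qed.

Lemma prod_pos (f : nat -> R) l : (forall i, In i l -> 0 < f i) -> 0 < prodl (map f l).
Proof.
  induction l as [|a l IH]; simpl; intros H. lra.
  apply Rmult_lt_0_compat; auto.
Qed.

Lemma prod_nonneg (f : nat -> R) l : (forall i, In i l -> 0 <= f i) -> 0 <= prodl (map f l).
Proof.
  induction l as [|a l IH]; simpl; intros H. lra.
  apply Rmult_le_pos; auto.
Qed.

Lemma prod_le2 (f g : nat -> R) l : (forall i, In i l -> 0 <= f i <= 2 * g i) ->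
  prodl (map f l) <= 2 ^ length l * prodl (map g l).
Proof.
  induction l as [|a l IH]; simpl; intros H. lra.
  assert (Ha := H a (or_introl eq_refl)).
  assert (IH' : prodl (map f l) <= 2 ^ length l * prodl (map g l)) by auto.
  assert (0 <= prodl (map f l)) by (apply prod_nonneg; intros; apply H; auto).
  replace (2 * 2 ^ length l * (g a * prodl (map g l))) with ((2 * g a) * (2 ^ length l * prodl (map g l))) by ring.
  apply Rmult_le_compat; lra.
Qed.

Lemma map_seq_shift (f : nat -> R) a n : map f (seq (S a) n) = map (fun i => f (S i)) (seq a n).
Proof. rewrite <- seq_shift, map_map. reflexivity. Qed.

Lemma In_Qset n r p q : In (p,q) (Qset n r) <-> (p <= n /\ q <= n /\ p + r + 1 <= q)%nat.
Proof.
  unfold Qset. rewrite filter_In, in_flat_map. split.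
  - intros [[p' [Hp Hq]] Hl]. rewrite in_map_iff in Hq. destruct Hq as [q' [E Hq]].
    inversion E; subst. apply in_seq in Hp. apply in_seq in Hq. simpl in Hl. apply Nat.leb_le in Hl. lia.
  - intros (H1 & H2 & H3). split. exists p. split. apply in_seq; lia.
    apply in_map_iff. exists q. split; auto. apply in_seq; lia.
    simpl. apply Nat.leb_le; lia.
Qed.

Lemma fold_Rmax_ge l a : In a l -> a <= fold_right Rmax 0 l.
Proof.
  induction l; simpl; intros H. contradiction.
  destruct H. subst; apply Rmax_l. eapply Rle_trans. apply IHl; auto. apply Rmax_r.
Qed.

Lemma fold_Rmax_le l B : 0 <= B -> (forall a, In a l -> a <= B) -> fold_right Rmax 0 l <= B.
Proof.
  intros HB; induction l; simpl; intros H. auto.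
  apply Rmax_lub; auto.
Qed.

Lemma fold_Rmax_nonneg l : 0 <= fold_right Rmax 0 l.
Proof. induction l; simpl. lra. eapply Rle_trans. apply IHl. apply Rmax_r. Qed.

Lemma Lambda_ge y n r f p q : (p <= n /\ q <= n /\ p + r + 1 <= q)%nat ->
  Lambda_pqr y n p q r f <= Lambda_r y n r f.
Proof.
  intros H. apply In_Qset in H. unfold Lambda_r. apply fold_Rmax_ge.
  apply in_map_iff. exists (p,q). auto.
Qed.

Lemma Lambda_nonneg y n r f : 0 <= Lambda_r y n r f.
Proof. apply fold_Rmax_nonneg. Qed.

Lemma Lambda_le y n r f B : 0 <= B ->
  (forall p q, (p <= n /\ q <= n /\ p + r + 1 <= q)%nat -> Lambda_pqr y n p q r f <= B) ->
  Lambda_r y n r f <= B.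
Proof.
  intros HB H. apply fold_Rmax_le; auto. intros a Ha. apply in_map_iff in Ha.
  destruct Ha as [[p q] [E Hin]]. subst. apply H. apply In_Qset. auto.
Qed.

Definition Dp (y : nat -> R) (n p q : nat) : R :=
  prodl (map (fun i => y q - y i) (seq 0 p)) * prodl (map (fun i => y i - y p) (seq (S q) (n - q))).

Lemma powerRZ_exp u p q r : (p + r + 1 <= q)%nat -> 0 < u ->
  powerRZ u (Z.of_nat p + Z.of_nat r - Z.of_nat q - 1) = / u ^ (q - p - r + 1).
Proof.
  intros H Hu.
  replace (Z.of_nat p + Z.of_nat r - Z.of_nat q - 1)%Z with (- Z.of_nat (q - p - r + 1))%Z by lia.
  rewrite powerRZ_neg', <- pow_powerRZ. reflexivity.
Qed.

Lemma Lpqr_eq y n p q r f : (p + r + 1 <= q)%nat -> 0 < y q - y p -> y q - y p <= dpq y n p q ->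
  Lambda_pqr y n p q r f =
  RInt (fun u => / u ^ (q - p - r + 1) * f u) (y q - y p) (dpq y n p q) / Dp y n p q.
Proof.
  intros H1 H2 H3. unfold Lambda_pqr, Dp. f_equal. apply RInt_ext. intros u Hu.
  rewrite Rmin_left in Hu by lra. rewrite powerRZ_exp; auto. lra.
Qed.
Definition mono (x : nat -> R) m := forall i, (i < m)%nat -> x i <= x (S i).
Definition gapc (x : nat -> R) m r := forall j, (j + r + 1 <= m)%nat -> x j < x (j + r + 1)%nat.

Lemma mono_le x m i j : mono x m -> (i <= j <= m)%nat -> x i <= x j.
Proof.
  intros Hm [Hij Hjm]. induction Hij. lra.
  eapply Rle_trans. apply IHHij. lia. apply Hm. lia.
Qed.

Lemma gap_lt x m r i j : mono x m -> gapc x m r -> (i + r + 1 <= j <= m)%nat -> x i < x j.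
Proof.
  intros Hm Hg H. eapply Rlt_le_trans. apply Hg. lia. apply (mono_le x m); auto.
Qed.

Lemma y_next_eq y n q : (q < n)%nat -> y_next y n q = y (S q).
Proof. intros H. unfold y_next. destruct (Nat.eqb_spec q n). lia. auto. Qed.
Lemma y_next_n y n : y_next y n n = y n + (y n - y 0%nat).
Proof. unfold y_next. rewrite Nat.eqb_refl. auto. Qed.

Lemma d_ge_len x m p q : mono x m -> (p <= q <= m)%nat -> x q - x p <= dpq x m p q.
Proof.
  intros Hm H. unfold dpq. apply Rmin_glb.
  - destruct (Nat.eq_dec q m). subst. rewrite y_next_n.
    assert (x 0%nat <= x m) by (apply (mono_le x m); auto; lia). lra.
    rewrite y_next_eq by lia. assert (x q <= x (S q)) by (apply Hm; lia). lra.
  - destruct p; simpl. assert (x 0%nat <= x m) by (apply (mono_le x m); auto; lia). lra.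
    assert (x p <= x (S p)) by (apply Hm; lia). lra.
Qed.

Lemma d_le_2L x m p q : mono x m -> (p <= q <= m)%nat -> dpq x m p q <= 2 * (x m - x 0%nat).
Proof.
  intros Hm H. unfold dpq. eapply Rle_trans. apply Rmin_l.
  assert (x 0%nat <= x p) by (apply (mono_le x m); auto; lia).
  destruct (Nat.eq_dec q m). subst. rewrite y_next_n. lra.
  rewrite y_next_eq by lia. assert (x (S q) <= x m) by (apply (mono_le x m); auto; lia). 
  assert (x 0%nat <= x m) by (apply (mono_le x m); auto; lia). lra.
Qed.

Lemma Dp_pos x m r p q : mono x m -> gapc x m r -> (p + r + 1 <= q <= m)%nat -> 0 < Dp x m p q.
Proof.
  intros Hm Hg H. unfold Dp. apply Rmult_lt_0_compat; apply prod_pos; intros i Hi; apply in_seq in Hi.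
  - assert (x i < x q) by (apply (gap_lt x m r); auto; lia). lra.
  - assert (x p < x i) by (apply (gap_lt x m r); auto; lia). lra.
Qed.

Lemma Lam_int_bound x m r om p q : mono x m -> gapc x m r -> inPhi om -> (p + r + 1 <= q <= m)%nat ->
  RInt (fun v => / v ^ (q - p - r + 1) * om v) (x q - x p) (dpq x m p q) <= Dp x m p q * Lambda_r x m r om.
Proof.
  intros Hm Hg Ho H.
  assert (Hl : 0 < x q - x p) by (assert (x p < x q) by (apply (gap_lt x m r); auto; lia); lra).
  assert (Hd := d_ge_len x m p q Hm ltac:(lia)).
  assert (HD := Dp_pos x m r p q Hm Hg H).
  assert (HL := Lambda_ge x m r om p q ltac:(lia)).
  rewrite Lpqr_eq in HL by (auto; lia).
  revert HL. generalize (RInt (fun u : R => / u ^ (q - p - r + 1) * om u) (x q - x p) (dpq x m p q)).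
  intros A HA. unfold Rdiv in HA. apply Rmult_le_compat_l with (r := Dp x m p q) in HA; [|lra].
  rewrite <- Rmult_assoc, (Rmult_comm _ A), Rmult_assoc, Rinv_r, Rmult_1_r in HA; lra.
Qed.

Lemma pow2_mono a b : (a <= b)%nat -> 2 ^ a <= 2 ^ b.
Proof. intros H. apply Rle_pow; auto; lra. Qed.

Lemma right_ext_prod x m p q : mono x m -> (p <= q < m)%nat ->
  (forall i, (i < p)%nat -> x (S q) - x q <= x q - x i) ->
  Dp x m p (S q) * (x (S q) - x p) <= 2 ^ p * Dp x m p q.
Proof.
  intros Hm H Hc. unfold Dp.
  replace (m - q)%nat with (S (m - S q)) by lia. simpl (seq (S q) _). simpl map. 
  unfold prodl at 4; simpl fold_right; fold (prodl (map (fun i : nat => x i - x p) (seq (S (S q)) (m - S q)))).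
  assert (HR : 0 <= prodl (map (fun i : nat => x i - x p) (seq (S (S q)) (m - S q)))).
  { apply prod_nonneg. intros i Hi. apply in_seq in Hi. assert (x p <= x i) by (apply (mono_le x m); auto; lia). lra. }
  assert (HL : prodl (map (fun i : nat => x (S q) - x i) (seq 0 p)) <= 2 ^ length (seq 0 p) * prodl (map (fun i : nat => x q - x i) (seq 0 p))).
  { apply prod_le2. intros i Hi. apply in_seq in Hi.
    assert (x i <= x q) by (apply (mono_le x m); auto; lia). assert (x q <= x (S q)) by (apply Hm; lia).
    specialize (Hc i ltac:(lia)). lra. }
  rewrite length_seq in HL.
  assert (x p <= x (S q)) by (apply (mono_le x m); auto; lia).
  assert (0 <= prodl (map (fun i : nat => x (S q) - x i) (seq 0 p))).
  { apply prod_nonneg. intros i Hi. apply in_seq in Hi. assert (x i <= x (S q)) by (apply (mono_le x m); auto; lia). lra. }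
  set (A := prodl (map (fun i : nat => x (S q) - x i) (seq 0 p))) in *.
  set (B := prodl (map (fun i : nat => x q - x i) (seq 0 p))) in *.
  set (R := prodl (map (fun i : nat => x i - x p) (seq (S (S q)) (m - S q)))) in *.
  replace (2 ^ p * (B * ((x (S q) - x p) * R))) with ((2 ^ p * B) * ((x (S q) - x p) * R)) by ring.
  replace (A * R * (x (S q) - x p)) with (A * ((x (S q) - x p) * R)) by ring.
  apply Rmult_le_compat_r; auto. apply Rmult_le_pos; lra.
Qed.

Lemma left_ext_prod x m p q : mono x m -> (S p <= q <= m)%nat ->
  (forall i, (q < i <= m)%nat -> x (S p) - x p <= x i - x (S p)) ->
  Dp x m p q * (x q - x p) <= 2 ^ (m - q) * Dp x m (S p) q.
Proof.
  intros Hm H Hc. unfold Dp. rewrite seq_S, map_app, prodl_app. simpl (map _ (_ :: nil)).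
  replace (prodl (x q - x p :: nil)) with (x q - x p) by (unfold prodl; simpl; ring).
  assert (HR : prodl (map (fun i : nat => x i - x p) (seq (S q) (m - q))) <= 2 ^ length (seq (S q) (m - q)) * prodl (map (fun i : nat => x i - x (S p)) (seq (S q) (m - q)))).
  { apply prod_le2. intros i Hi. apply in_seq in Hi.
    assert (x p <= x (S p)) by (apply Hm; lia). assert (x (S p) <= x i) by (apply (mono_le x m); auto; lia).
    specialize (Hc i ltac:(lia)). lra. }
  rewrite length_seq in HR.
  assert (0 <= prodl (map (fun i : nat => x q - x i) (seq 0 p))).
  { apply prod_nonneg. intros i Hi. apply in_seq in Hi. assert (x i <= x q) by (apply (mono_le x m); auto; lia). lra. }
  assert (0 <= prodl (map (fun i : nat => x i - x p) (seq (S q) (m - q)))).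
  { apply prod_nonneg. intros i Hi. apply in_seq in Hi. assert (x p <= x i) by (apply (mono_le x m); auto; lia). lra. }
  assert (x p <= x q) by (apply (mono_le x m); auto; lia).
  set (A := prodl (map (fun i : nat => x q - x i) (seq 0 p))) in *.
  set (B := prodl (map (fun i : nat => x i - x p) (seq (S q) (m - q)))) in *.
  set (C := prodl (map (fun i : nat => x i - x (S p)) (seq (S q) (m - q)))) in *.
  replace (A * B * (x q - x p)) with ((A * (x q - x p)) * B) by ring.
  replace (2 ^ (m - q) * (A * (x q - x p) * C)) with ((A * (x q - x p)) * (2 ^ (m - q) * C)) by (simpl; ring).
  apply Rmult_le_compat_l; auto. apply Rmult_le_pos; lra.
Qed.

Lemma ext x m r p q : mono x m -> gapc x m r -> (p + r + 1 <= q <= m)%nat -> (1 <= p + (m - q))%nat ->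
  exists p' q', (p' + (m - q') = p + (m - q) - 1)%nat /\ (p' + r + 1 <= q' <= m)%nat /\
    x q' - x p' = dpq x m p q /\ Dp x m p' q' * dpq x m p q <= 2 ^ (p + (m - q)) * Dp x m p q.
Proof.
  intros Hm Hg H He.
  assert (H0m : x 0%nat <= x m) by (apply (mono_le x m); auto; lia).
  assert (Hpq : x p <= x q) by (apply (mono_le x m); auto; lia).
  assert (H0p : x 0%nat <= x p) by (apply (mono_le x m); auto; lia).
  destruct (Nat.eq_dec q m) as [Eq|Nq].
  - subst q. destruct p as [|p0]. lia.
    assert (Hd : dpq x m (S p0) m = x m - x p0).
    { unfold dpq. rewrite y_next_n. simpl y_prev.
      assert (x 0%nat <= x p0) by (apply (mono_le x m); auto; lia). apply Rmin_right. lra. }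
    exists p0, m. split. lia. split. lia. split. auto. rewrite Hd.
    eapply Rle_trans. apply left_ext_prod; auto; [lia| intros; lia].
    rewrite Nat.sub_diag. apply Rmult_le_compat_r. left; apply Dp_pos with r; auto. apply pow2_mono; lia.
  - assert (Hsq : x q <= x (S q)) by (apply Hm; lia).
    destruct p as [|p0].
    + assert (Hd : dpq x m 0 q = x (S q) - x 0%nat).
      { unfold dpq. rewrite y_next_eq by lia. simpl y_prev.
        assert (x (S q) <= x m) by (apply (mono_le x m); auto; lia). apply Rmin_left. lra. }
      exists 0%nat, (S q). split. lia. split. lia. split. auto. rewrite Hd.
      eapply Rle_trans. apply right_ext_prod; auto; [lia| intros; lia].
      apply Rmult_le_compat_r. left; apply Dp_pos with r; auto. apply pow2_mono; lia.
    + assert (Hp0 : x p0 <= x (S p0)) by (apply Hm; lia).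
      destruct (Rle_dec (x (S q) - x (S p0)) (x q - x p0)) as [Hr|Hr].
      * assert (Hd : dpq x m (S p0) q = x (S q) - x (S p0)).
        { unfold dpq. rewrite y_next_eq by lia. simpl y_prev. apply Rmin_left. lra. }
        exists (S p0), (S q). split. lia. split. lia. split. auto. rewrite Hd.
        eapply Rle_trans. apply right_ext_prod; auto. lia.
        intros i Hi. assert (x i <= x p0) by (apply (mono_le x m); auto; lia). lra.
        apply Rmult_le_compat_r. left; apply Dp_pos with r; auto. apply pow2_mono; lia.
      * assert (Hd : dpq x m (S p0) q = x q - x p0).
        { unfold dpq. rewrite y_next_eq by lia. simpl y_prev. apply Rmin_right. lra. }
        exists p0, q. split. lia. split. lia. split. auto. rewrite Hd.
        eapply Rle_trans. apply left_ext_prod; auto. lia.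
        intros i Hi. assert (x (S q) <= x i) by (apply (mono_le x m); auto; lia). lra.
        apply Rmult_le_compat_r. left; apply Dp_pos with r; auto. apply pow2_mono; lia.
Qed.

Fixpoint Kc (e : nat) : R := match e with O => 2 | S e' => 1 + 2 ^ (S e') * Kc e' end.

Lemma Kc_pos e : 0 < Kc e.
Proof. induction e; simpl. lra. assert (0 < 2 * 2 ^ e) by (apply Rmult_lt_0_compat; [lra| apply pow_lt; lra]). nra. Qed.

Lemma Kc_S e : Kc e <= Kc (S e).
Proof.
  simpl. assert (1 <= 2 ^ e) by (apply pow_R1_Rle; lra). assert (0 < Kc e) by apply Kc_pos. nra.
Qed.

Lemma Kc_le e e' : (e <= e')%nat -> Kc e <= Kc e'.
Proof. induction 1. lra. eapply Rle_trans. apply IHle. apply Kc_S. Qed.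

Lemma RInt_w_cmp n n' f a b C : inPhi f -> 0 < a -> a <= b ->
  (forall v, a < v < b -> / v ^ n <= C * / v ^ n') ->
  RInt (fun v => / v ^ n * f v) a b <= C * RInt (fun v => / v ^ n' * f v) a b.
Proof.
  intros Hf Ha Hab H.
  assert (E : C * RInt (fun v => / v ^ n' * f v) a b = RInt (fun v => C * (/ v ^ n' * f v)) a b).
  { symmetry. apply (RInt_scal (V := R_CompleteNormedModule) (fun v => / v ^ n' * f v) a b C). apply exR; auto. }
  rewrite E. apply RInt_le; auto. apply exR; auto.
  apply (ex_RInt_scal (V := R_CompleteNormedModule) (fun v => / v ^ n' * f v) a b C). apply exR; auto.
  intros v Hv. rewrite <- Rmult_assoc. apply Rmult_le_compat_r. apply phi_nonneg; auto; lra. auto.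
Qed.

Lemma Kbound k r m x om : m = (r + k)%nat -> mono x m -> gapc x m r -> inPhi om ->
  forall e p q t, e = (p + (m - q))%nat -> (p + r + 1 <= q <= m)%nat -> x q - x p <= t <= dpq x m p q ->
  t ^ e * RInt (fun v => / v ^ k * om v) t (2 * (x m - x 0%nat)) <= Kc e * t * Dp x m p q * Lambda_r x m r om.
Proof.
  intros Hmk Hm Hg Ho e. induction e as [|e IH]; intros p q t He Hpq Ht.
  - assert (p = 0%nat /\ q = m) as [-> ->] by lia.
    assert (HD : Dp x m 0 m = 1) by (unfold Dp; rewrite Nat.sub_diag; unfold prodl; simpl; ring).
    assert (Hd : dpq x m 0 m = 2 * (x m - x 0%nat)).
    { unfold dpq. rewrite y_next_n. simpl y_prev. rewrite Rmin_left by lra. ring. }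
    rewrite HD, Hd in *. simpl Kc. rewrite pow_O, Rmult_1_l, Rmult_1_r.
    assert (Hl : 0 < x m - x 0%nat) by (assert (x 0%nat < x m) by (apply (gap_lt x m r); auto; lia); lra).
    assert (HI := Lam_int_bound x m r om 0 m Hm Hg Ho ltac:(lia)).
    rewrite HD, Hd in HI. replace (m - 0 - r + 1)%nat with (S k) in HI by lia.
    assert (HLn := Lambda_nonneg x m r om).
    eapply Rle_trans. apply (RInt_w_cmp k (S k) om t _ (2 * (x m - x 0%nat))); auto; try lra.
    intros v Hv. simpl. rewrite Rinv_mult. 
    assert (0 < / v ^ k) by (apply Rinv_0_lt_compat, pow_lt; lra).
    assert (/ v >= / (2 * (x m - x 0%nat))) by (apply Rle_ge, Rinv_le_contravar; lra).
    assert (1 <= 2 * (x m - x 0%nat) * / v). { rewrite <- (Rinv_r v) by lra. apply Rmult_le_compat_r. left; apply Rinv_0_lt_compat; lra. lra. }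
    nra.
    assert (RInt (fun v : R => / v ^ S k * om v) t (2 * (x m - x 0%nat)) <= RInt (fun v : R => / v ^ S k * om v) (x m - x 0%nat) (2 * (x m - x 0%nat))).
    { apply RInt_w_sub; auto; lra. }
    nra.
  - assert (He1 : (1 <= p + (m - q))%nat) by lia.
    destruct (ext x m r p q Hm Hg Hpq He1) as (p' & q' & He' & Hpq' & Hlen & HDD).
    set (d := dpq x m p q) in *.
    assert (Hl : 0 < x q - x p) by (assert (x p < x q) by (apply (gap_lt x m r); auto; lia); lra).
    assert (Hd2 : d <= 2 * (x m - x 0%nat)) by (apply d_le_2L; auto; lia).
    assert (HD : 0 < Dp x m p q) by (apply Dp_pos with r; auto).
    assert (HD' : 0 < Dp x m p' q') by (apply Dp_pos with r; auto).
    assert (HLn := Lambda_nonneg x m r om).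
    assert (IH' := IH p' q' d ltac:(lia) Hpq' ltac:(split; [lra| rewrite <- Hlen; apply d_ge_len; auto; lia])).
    rewrite (RInt_w_chasles k om t d) by (auto; lra).
    assert (HFd : 0 <= RInt (fun v => / v ^ k * om v) d (2 * (x m - x 0%nat))) by (apply RInt_w_nonneg; auto; lra).
    assert (HI := Lam_int_bound x m r om p q Hm Hg Ho Hpq). fold d in HI.
    assert (A1 : RInt (fun v => / v ^ k * om v) t d <= / t ^ e * RInt (fun v => / v ^ (q - p - r + 1) * om v) t d).
    { apply RInt_w_cmp; auto; try lra. intros v Hv.
      replace k with ((q - p - r + 1) + e)%nat by lia. rewrite pow_add, Rinv_mult, (Rmult_comm (/ t ^ e)).
      apply Rmult_le_compat_l. left; apply Rinv_0_lt_compat, pow_lt; lra.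
      apply Rinv_le_contravar. apply pow_lt; lra. apply pow_incr; lra. }
    assert (A2 : RInt (fun v => / v ^ (q - p - r + 1) * om v) t d <= RInt (fun v => / v ^ (q - p - r + 1) * om v) (x q - x p) d).
    { apply RInt_w_sub; auto; lra. }
    assert (Hte : 0 < t ^ e) by (apply pow_lt; lra).
    assert (Htd : t ^ e <= d ^ e) by (apply pow_incr; lra).
    set (I1 := RInt (fun v => / v ^ k * om v) t d) in *.
    set (I2 := RInt (fun v => / v ^ (q - p - r + 1) * om v) t d) in *.
    set (I3 := RInt (fun v => / v ^ (q - p - r + 1) * om v) (x q - x p) d) in *.
    set (Fd := RInt (fun v => / v ^ k * om v) d (2 * (x m - x 0%nat))) in *.
    set (L := Lambda_r x m r om) in *.
    set (D := Dp x m p q) in *. set (D' := Dp x m p' q') in *.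
    assert (B1 : t ^ e * I1 <= I3).
    { apply Rmult_le_compat_l with (r := t ^ e) in A1; [|lra].
      rewrite <- Rmult_assoc, Rinv_r, Rmult_1_l in A1 by lra. lra. }
    assert (B2 : t ^ e * Fd <= Kc e * d * D' * L).
    { eapply Rle_trans. apply Rmult_le_compat_r. exact HFd. exact Htd. exact IH'. }
    assert (B3 : Kc e * d * D' * L <= Kc e * 2 ^ S e * D * L).
    { assert (0 < Kc e) by apply Kc_pos. rewrite He.
      replace (Kc e * d * D' * L) with (Kc e * L * (D' * d)) by ring.
      replace (Kc e * 2 ^ (p + (m - q)) * D * L) with (Kc e * L * (2 ^ (p + (m - q)) * D)) by ring.
      apply Rmult_le_compat_l; auto. apply Rmult_le_pos; lra. }
    simpl Kc. change (t ^ S e) with (t * t ^ e). change (2 ^ S e) with (2 * 2 ^ e) in *.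
    replace (t * t ^ e * (I1 + Fd)) with (t * (t ^ e * I1) + t * (t ^ e * Fd)) by ring.
    assert (t * (t ^ e * I1) <= t * (D * L)) by (apply Rmult_le_compat_l; lra).
    assert (t * (t ^ e * Fd) <= t * (Kc e * (2 ^ e * 2) * D * L)) by (apply Rmult_le_compat_l; lra).
    nra.
Qed.

Lemma exR_any n f a b : inPhi f -> 0 < a -> 0 < b -> ex_RInt (fun v => / v ^ n * f v) a b.
Proof.
  intros Hf Ha Hb. destruct (Rle_dec a b). apply exR; auto.
  apply (ex_RInt_swap (V := R_CompleteNormedModule)). apply exR; auto; lra.
Qed.

Lemma F_deriv k om T u : inPhi om -> 0 < T -> 0 < u ->
  is_derive (fun t => RInt (fun v => / v ^ k * om v) t T) u (- (/ u ^ k * om u)).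
Proof.
  intros Ho HT Hu.
  refine (is_derive_RInt' (V := R_NormedModule) (fun v => / v ^ k * om v) (fun t => RInt (fun v => / v ^ k * om v) t T) u T _ _).
  - assert (Hu2 : 0 < u / 2) by lra. exists (mkposreal _ Hu2). intros y Hy.
    unfold ball in Hy; simpl in Hy. unfold AbsRing_ball, abs, minus, plus, opp in Hy; simpl in Hy.
    apply Rabs_lt_between in Hy.
    apply (RInt_correct (V := R_CompleteNormedModule)). apply exR_any; auto; lra.
  - apply cont_w; auto.
Qed.

Lemma F_cont k om T u : inPhi om -> 0 < T -> 0 < u ->
  continuity_pt (fun t => RInt (fun v => / v ^ k * om v) t T) u.
Proof.
  intros Ho HT Hu. apply continuity_pt_filterlim.
  apply (ex_derive_continuous (K := R_AbsRing) (V := R_NormedModule) (fun t => RInt (fun v => / v ^ k * om v) t T) u).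
  eexists. apply F_deriv; auto.
Qed.

Lemma h_cont k om T e u : inPhi om -> 0 < T -> 0 < u ->
  continuous (fun t => t ^ e * RInt (fun v => / v ^ k * om v) t T) u.
Proof.
  intros Ho HT Hu. apply continuity_pt_filterlim.
  apply continuity_pt_mult. apply derivable_continuous_pt. apply derivable_pt_pow.
  apply F_cont; auto.
Qed.

Lemma ibp k s e om a c T : (k = s + 1 + e)%nat -> (1 <= e)%nat -> inPhi om -> 0 < a -> a <= c -> 0 < T ->
  ex_RInt (fun u => u ^ (e - 1) * RInt (fun v => / v ^ k * om v) u T) a c /\
  INR e * RInt (fun u => u ^ (e - 1) * RInt (fun v => / v ^ k * om v) u T) a c =
    c ^ e * RInt (fun v => / v ^ k * om v) c T - a ^ e * RInt (fun v => / v ^ k * om v) a T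
    + RInt (fun u => / u ^ (s + 1) * om u) a c.
Proof.
  intros Hk He Ho Ha Hac HT.
  set (F := fun t => RInt (fun v => / v ^ k * om v) t T).
  set (h := fun u => u ^ (e - 1) * F u).
  assert (Hex : ex_RInt h a c).
  { apply (ex_RInt_continuous (V := R_CompleteNormedModule)). intros z Hz. rewrite Rmin_left in Hz by lra.
    apply h_cont; auto; lra. }
  split. exact Hex.
  assert (HI := is_RInt_derive (V := R_CompleteNormedModule) (fun u => u ^ e * F u)
     (fun u => INR e * h u - / u ^ (s + 1) * om u) a c).
  assert (HI' : is_RInt (fun u => INR e * h u - / u ^ (s + 1) * om u) a c (c ^ e * F c - a ^ e * F a)).
  { apply HI.
    - intros u Hu. rewrite Rmin_left, Rmax_right in Hu by lra.
      apply is_derive_Reals.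
      replace (INR e * h u - / u ^ (s + 1) * om u) with
        ((INR e * u ^ Init.Nat.pred e) * F u + u ^ e * (- (/ u ^ k * om u))).
      apply derivable_pt_lim_mult. apply derivable_pt_lim_pow.
      apply is_derive_Reals. apply F_deriv; auto; lra.
      unfold h. replace (Init.Nat.pred e) with (e - 1)%nat by lia.
      rewrite Hk. rewrite pow_add, pow_add. 
      assert (u ^ e <> 0) by (apply pow_nonzero; lra).
      assert (u ^ s <> 0) by (apply pow_nonzero; lra).
      assert (u ^ 1 <> 0) by (apply pow_nonzero; lra).
      field. repeat split; auto; lra.
    - intros u Hu. rewrite Rmin_left, Rmax_right in Hu by lra.
      apply continuity_pt_filterlim. apply continuity_pt_minus.
      apply continuity_pt_mult. apply continuity_pt_const. intros x1 y1; reflexivity.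
      apply continuity_pt_filterlim. apply h_cont; auto; lra.
      apply continuity_pt_filterlim. apply cont_w; auto; lra. }
  apply (is_RInt_unique (V := R_CompleteNormedModule)) in HI'.
  rewrite (RInt_minus (V := R_CompleteNormedModule)) in HI'.
  2:{ apply (ex_RInt_scal (V := R_CompleteNormedModule) h a c (INR e)); auto. }
  2:{ apply exR; auto. }
  rewrite (RInt_scal (V := R_CompleteNormedModule)) in HI' by auto.
  unfold minus, plus, opp, scal in HI'; simpl in HI'. unfold mult in HI'; simpl in HI'.
  unfold h, F in *. lra.
Qed.

Lemma RInt_w_fg n f g a b : inPhi f -> inPhi g -> 0 < a -> a <= b ->
  (forall v, a < v < b -> f v <= g v) ->
  RInt (fun v => / v ^ n * f v) a b <= RInt (fun v => / v ^ n * g v) a b.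
Proof.
  intros Hf Hg Ha Hab H. apply RInt_le; auto; try (apply exR; auto).
  intros v Hv. apply Rmult_le_compat_l. left; apply Rinv_0_lt_compat, pow_lt; lra. auto.
Qed.

Lemma RInt_pt_zero (f : R -> R) a : RInt f a a = 0.
Proof. rewrite (RInt_point (V := R_CompleteNormedModule)). reflexivity. Qed.

Lemma APL k s e (phi om : R -> R) L a b Dy Lam C :
  (k = s + 1 + e)%nat -> inPhi phi -> inPhi om -> 0 < L ->
  (forall t, 0 < t <= L -> phi t <= t ^ (k - 1) * RInt (fun u => / u ^ k * om u) t (2 * L)) ->
  (forall t, L <= t <= 2 * L -> phi t <= om t) ->
  0 < a -> a <= b -> b <= 2 * L -> b ^ e <= Dy -> 0 <= Lam -> 0 <= C ->
  RInt (fun v => / v ^ (k + 1) * om v) L (2 * L) <= Lam ->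
  ((1 <= e)%nat -> a < L ->
     RInt (fun u => / u ^ (s + 1) * om u) a (Rmin b L) <= C * L * Dy * Lam /\
     Rmin b L ^ e * RInt (fun u => / u ^ k * om u) (Rmin b L) (2 * L) <= C * L * Dy * Lam) ->
  (e = 0%nat -> b <= 2 * a /\ (a < L -> RInt (fun u => / u ^ k * om u) a (2 * L) <= C * L * Lam)) ->
  RInt (fun u => / u ^ (s + 1) * phi u) a b / Dy <= (2 ^ (e + 1) + 2 * C) * L * Lam.
Proof.
  intros Hk Hp Ho HL Hphi1 Hphi2 Ha Hab Hb2 HDy HLam HC HLam0 He1 He0.
  assert (Hbe : 0 < b ^ e) by (apply pow_lt; lra).
  assert (HDy0 : 0 < Dy) by lra.
  set (c := Rmax a (Rmin b L)).
  assert (Hac : a <= c) by apply Rmax_l.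
  assert (Hcb : c <= b) by (apply Rmax_lub; [lra| apply Rmin_l]).
  rewrite (RInt_w_chasles (s + 1) phi a c b) by auto.
  assert (High : RInt (fun u => / u ^ (s + 1) * phi u) c b <= 2 ^ (e + 1) * L * Dy * Lam).
  { destruct (Rle_dec b L) as [HbL|HbL].
    - assert (c = b) as -> by (unfold c; rewrite Rmin_left by lra; apply Rmax_right; lra).
      rewrite RInt_pt_zero. apply Rmult_le_pos; [|lra]. apply Rmult_le_pos; [|lra].
      apply Rmult_le_pos; [apply pow_le|]; lra.
    - assert (HcL : L <= c) by (unfold c; rewrite Rmin_right by lra; apply Rmax_r).
      eapply Rle_trans. apply RInt_w_fg with (g := om); auto; try lra.
      intros v Hv. apply Hphi2. lra.
      eapply Rle_trans. apply (RInt_w_cmp (s + 1) (k + 1) om c b (2 ^ (e + 1) * L * Dy)); auto; try lra.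
      + intros v Hv. replace (v ^ (k + 1)) with (v ^ (s + 1) * v ^ (e + 1)) by (rewrite <- pow_add; f_equal; lia).
        rewrite Rinv_mult.
        assert (0 < / v ^ (s + 1)) by (apply Rinv_0_lt_compat, pow_lt; lra).
        assert (Hv1 : v ^ (e + 1) <= 2 ^ (e + 1) * L * Dy).
        { eapply Rle_trans. apply pow_incr with (y := 2 * L). lra.
          rewrite Rpow_mult_distr.
          replace (L ^ (e + 1)) with (L ^ e * L) by (rewrite pow_add; simpl; ring).
          assert (L ^ e <= b ^ e) by (apply pow_incr; lra).
          assert (0 < 2 ^ (e + 1)) by (apply pow_lt; lra).
          assert (0 < L ^ e) by (apply pow_lt; lra).
          replace (2 ^ (e + 1) * L * Dy) with (2 ^ (e + 1) * (Dy * L)) by ring.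
          apply Rmult_le_compat_l. lra. apply Rmult_le_compat_r; lra. }
        assert (0 < v ^ (e + 1)) by (apply pow_lt; lra).
        replace (/ v ^ (s + 1)) with (v ^ (e + 1) * (/ v ^ (s + 1) * / v ^ (e + 1))) at 1 by (field; split; apply pow_nonzero; lra).
        apply Rmult_le_compat_r; auto.
        apply Rmult_le_pos; left; [auto| apply Rinv_0_lt_compat; auto].
      + apply Rmult_le_compat_l.
        assert (0 < 2 ^ (e + 1)) by (apply pow_lt; lra). apply Rmult_le_pos; [apply Rmult_le_pos|]; lra.
        eapply Rle_trans. apply RInt_w_sub with (a := L) (b := 2 * L); auto; lra. auto. }
  assert (Low : RInt (fun u => / u ^ (s + 1) * phi u) a c <= 2 * C * L * Dy * Lam).
  { destruct (Rle_dec L a) as [HaL|HaL].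
    - assert (c = a) as -> by (unfold c; apply Rmax_left; eapply Rle_trans; [apply Rmin_r| lra]).
      rewrite RInt_pt_zero. repeat apply Rmult_le_pos; lra.
    - assert (Hc : c = Rmin b L) by (unfold c; apply Rmax_right; apply Rmin_glb; lra).
      assert (HcL : c <= L) by (rewrite Hc; apply Rmin_r).
      destruct e as [|e'].
      + destruct (He0 eq_refl) as [Hb2a HFa]. specialize (HFa ltac:(lra)).
        simpl in HDy.
        set (Fa := RInt (fun u => / u ^ k * om u) a (2 * L)) in *.
        assert (HFa0 : 0 <= Fa) by (apply RInt_w_nonneg; auto; lra).
        assert (Hpt : RInt (fun u => / u ^ (s + 1) * phi u) a c <= RInt (fun _ => / a * Fa) a c).
        { apply RInt_le; auto. apply exR; auto. apply (ex_RInt_const (V := R_CompleteNormedModule)).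
          intros u Hu. 
          assert (Hpu := Hphi1 u ltac:(lra)). replace (k - 1)%nat with s in Hpu by lia.
          assert (HFu : RInt (fun u => / u ^ k * om u) u (2 * L) <= Fa).
          { unfold Fa. rewrite (RInt_w_chasles k om a u (2 * L)) by (auto; lra).
            assert (0 <= RInt (fun v => / v ^ k * om v) a u) by (apply RInt_w_nonneg; auto; lra). lra. }
          assert (HF0 : 0 <= RInt (fun u => / u ^ k * om u) u (2 * L)) by (apply RInt_w_nonneg; auto; lra).
          assert (0 < / u ^ (s + 1)) by (apply Rinv_0_lt_compat, pow_lt; lra).
          eapply Rle_trans. apply Rmult_le_compat_l. lra. exact Hpu.
          replace (/ u ^ (s + 1) * (u ^ s * RInt (fun u0 : R => / u0 ^ k * om u0) u (2 * L)))
            with (/ u * RInt (fun u0 : R => / u0 ^ k * om u0) u (2 * L)).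
          2:{ rewrite pow_add, pow_1. field. split; [lra| apply pow_nonzero; lra]. }
          apply Rmult_le_compat; auto. left; apply Rinv_0_lt_compat; lra.
          apply Rinv_le_contravar; lra. }
        rewrite (RInt_const (V := R_CompleteNormedModule)) in Hpt. unfold scal in Hpt; simpl in Hpt; unfold mult in Hpt; simpl in Hpt.
        assert ((c - a) * (/ a * Fa) <= Fa).
        { replace ((c - a) * (/ a * Fa)) with (((c - a) / a) * Fa) by (field; lra).
          assert ((c - a) / a <= 1) by (apply Rmult_le_reg_r with a; [lra|]; unfold Rdiv; rewrite Rmult_assoc, Rinv_l; lra).
          assert (0 <= (c - a) / a) by (apply Rmult_le_pos; [lra| left; apply Rinv_0_lt_compat; lra]).
          nra. }
        assert (C * L * Lam <= C * L * Dy * Lam).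
        { replace (C * L * Dy * Lam) with ((C * L * Lam) * Dy) by ring.
          assert (0 <= C * L * Lam) by (repeat apply Rmult_le_pos; lra). nra. }
        assert (0 <= C * L * Dy * Lam) by (repeat apply Rmult_le_pos; lra).
        lra.
      + destruct (He1 ltac:(lia) ltac:(lra)) as [HB1 HB2]. rewrite <- Hc in HB1, HB2.
        destruct (ibp k s (S e') om a c (2 * L) Hk ltac:(lia) Ho Ha Hac ltac:(lra)) as [Hex Hibp].
        assert (Hpt : RInt (fun u => / u ^ (s + 1) * phi u) a c <=
                      RInt (fun u => u ^ (S e' - 1) * RInt (fun v => / v ^ k * om v) u (2 * L)) a c).
        { apply RInt_le; auto. apply exR; auto.
          intros u Hu. assert (Hpu := Hphi1 u ltac:(lra)).
          assert (0 < / u ^ (s + 1)) by (apply Rinv_0_lt_compat, pow_lt; lra).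
          eapply Rle_trans. apply Rmult_le_compat_l. lra. exact Hpu.
          right. replace (k - 1)%nat with ((s + 1) + (S e' - 1))%nat by lia.
          rewrite (pow_add u (s + 1)), <- !Rmult_assoc, Rinv_l, Rmult_1_l by (apply pow_nonzero; lra). reflexivity. }
        assert (Hh0 : 0 <= RInt (fun u => u ^ (S e' - 1) * RInt (fun v => / v ^ k * om v) u (2 * L)) a c).
        { apply RInt_ge_0; auto. intros u Hu. apply Rmult_le_pos. apply pow_le; lra.
          apply RInt_w_nonneg; auto; lra. }
        assert (Ha0 : 0 <= a ^ S e' * RInt (fun v => / v ^ k * om v) a (2 * L)).
        { apply Rmult_le_pos. apply pow_le; lra. apply RInt_w_nonneg; auto; lra. }
        assert (HE : 1 <= INR (S e')) by (apply (le_INR 1); lia).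
        set (I := RInt (fun u => u ^ (S e' - 1) * RInt (fun v => / v ^ k * om v) u (2 * L)) a c) in *.
        assert (I <= INR (S e') * I) by nra.
        lra. }
  unfold Rdiv. apply Rmult_le_reg_r with Dy; auto.
  rewrite Rmult_assoc, Rinv_l, Rmult_1_r by lra. nra.
Qed.

Definition Cb (k : nat) : R := (1 + 2 ^ (k + 1)) * (1 + Kc k).
Definition cst (k : nat) : R := 2 ^ k + 2 * Cb k.

Lemma Cb_facts k e : (e <= k)%nat ->
  1 <= Cb k /\ Kc e <= Cb k /\ 2 ^ (e + 1) * Kc e <= Cb k /\ 1 + 2 ^ (e + 1) <= Cb k.
Proof.
  intros H. unfold Cb.
  assert (H1 : 2 ^ (e + 1) <= 2 ^ (k + 1)) by (apply pow2_mono; lia).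
  assert (H2 : Kc e <= Kc k) by (apply Kc_le; auto).
  assert (H3 : 0 < Kc e) by apply Kc_pos.
  assert (H4 : 0 < 2 ^ (e + 1)) by (apply pow_lt; lra).
  nra.
Qed.

Lemma mono_sub x m : mono x m -> mono x (m - 1).
Proof. intros H i Hi. apply H. lia. Qed.

Lemma Dp_last x m p q : (1 <= m)%nat -> (q <= m - 1)%nat -> Dp x m p q = Dp x (m - 1) p q * (x m - x p).
Proof.
  intros H1 H2. unfold Dp. replace (m - q)%nat with (S (m - 1 - q)) by lia.
  rewrite seq_S, map_app, prodl_app. replace (S q + (m - 1 - q))%nat with m by lia.
  unfold prodl at 3. simpl. ring.
Qed.

Lemma Lam_top x m r k om : (1 <= k)%nat -> m = (r + k)%nat -> mono x m -> gapc x m r -> inPhi om ->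
  RInt (fun v => / v ^ (k + 1) * om v) (x m - x 0%nat) (2 * (x m - x 0%nat)) <= Lambda_r x m r om.
Proof.
  intros Hk Hmk Hm Hg Ho.
  assert (HD : Dp x m 0 m = 1) by (unfold Dp; rewrite Nat.sub_diag; unfold prodl; simpl; ring).
  assert (Hd : dpq x m 0 m = 2 * (x m - x 0%nat)).
  { unfold dpq. rewrite y_next_n. simpl y_prev. rewrite Rmin_left by lra. ring. }
  assert (HI := Lam_int_bound x m r om 0 m Hm Hg Ho ltac:(lia)).
  rewrite HD, Hd in HI. replace (m - 0 - r + 1)%nat with (k + 1)%nat in HI by lia.
  simpl in HI. lra.
Qed.

Lemma final_const k e L Lam C : (e + 1 <= k)%nat -> 0 <= L -> 0 <= Lam -> C = Cb k ->
  (2 ^ (e + 1) + 2 * C) * L * Lam <= cst k * L * Lam.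
Proof.
  intros He HL HLam ->. unfold cst. apply Rmult_le_compat_r; auto. apply Rmult_le_compat_r; auto.
  assert (2 ^ (e + 1) <= 2 ^ k) by (apply pow2_mono; lia). lra.
Qed.

Lemma Dp_full y n p : Dp y n p n = prodl (map (fun i => y n - y i) (seq 0 p)).
Proof. unfold Dp. rewrite Nat.sub_diag. cbn [seq map]. unfold prodl at 2. cbn [fold_right]. ring. Qed.

Lemma claim1 k r m x phi om p q :
  (2 <= k)%nat -> m = (r + k)%nat -> mono x m -> gapc x m r -> inPhi phi -> inPhi om ->
  (forall t, 0 < t <= x m - x 0%nat -> phi t <= t ^ (k - 1) * RInt (fun u => / u ^ k * om u) t (2 * (x m - x 0%nat))) ->
  (forall t, x m - x 0%nat <= t <= 2 * (x m - x 0%nat) -> phi t <= om t) ->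
  (p <= m - 1 /\ q <= m - 1 /\ p + r + 1 <= q)%nat ->
  Lambda_pqr x (m - 1) p q r phi <= cst k * (x m - x 0%nat) * Lambda_r x m r om.
Proof.
  intros Hk Hmk Hm Hg Hp Ho Hphi1 Hphi2 Hpq.
  assert (HL : 0 < x m - x 0%nat) by (assert (x 0%nat < x m) by (apply (gap_lt x m r); auto; lia); lra).
  assert (Hm' := mono_sub x m Hm).
  assert (Ha : 0 < x q - x p) by (assert (x p < x q) by (apply (gap_lt x m r); auto; lia); lra).
  assert (Hab : x q - x p <= dpq x (m - 1) p q) by (apply d_ge_len; auto; lia).
  assert (Hb2 : dpq x (m - 1) p q <= 2 * (x m - x 0%nat)).
  { eapply Rle_trans. apply d_le_2L; auto; lia. assert (x (m - 1)%nat <= x m) by (apply (mono_le x m); auto; lia). lra. }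
  rewrite Lpqr_eq by (auto; lia).
  assert (HLn := Lambda_nonneg x m r om).
  assert (HLt := Lam_top x m r k om ltac:(lia) Hmk Hm Hg Ho).
  remember (q - p - r)%nat as s eqn:Hs.
  remember (p + (m - 1 - q))%nat as e eqn:He.
  replace (q - p - r + 1)%nat with (s + 1)%nat by lia.
  assert (Hkse : k = (s + 1 + e)%nat) by lia.
  destruct (Cb_facts k e ltac:(lia)) as (C1 & C2 & C3 & C4).
  destruct (Cb_facts k (S e) ltac:(lia)) as (_ & C5 & _ & _).
  assert (Hxp : x m - x p <= x m - x 0%nat) by (assert (x 0%nat <= x p) by (apply (mono_le x m); auto; lia); lra).
  assert (HDy : dpq x (m - 1) p q ^ e <= Dp x (m - 1) p q).
  { unfold Dp. rewrite He, pow_add.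
    assert (Hb0 : 0 <= dpq x (m - 1) p q) by lra.
    assert (HA := prod_ge (fun i => x q - x i) (seq 0 p) (dpq x (m - 1) p q) Hb0).
    assert (HB := prod_ge (fun i => x i - x p) (seq (S q) (m - 1 - q)) (dpq x (m - 1) p q) Hb0).
    rewrite length_seq in HA, HB.
    apply Rmult_le_compat; try (apply pow_le; lra).
    - apply HA. intros i Hi. apply in_seq in Hi. destruct p as [|p0]. lia.
      eapply Rle_trans. unfold dpq. apply Rmin_r. simpl y_prev.
      assert (x i <= x p0) by (apply (mono_le x m); auto; lia). lra.
    - apply HB. intros i Hi. apply in_seq in Hi.
      eapply Rle_trans. unfold dpq. apply Rmin_l. rewrite y_next_eq by lia.
      assert (x (S q) <= x i) by (apply (mono_le x m); auto; lia). lra. }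
  assert (HD0 : Dp x m p q = Dp x (m - 1) p q * (x m - x p)) by (apply Dp_last; lia).
  assert (HDy0 : 0 < Dp x (m - 1) p q) by (apply Rlt_le_trans with (dpq x (m - 1) p q ^ e); [apply pow_lt; lra| exact HDy]).
  assert (HI0 := Lam_int_bound x m r om p q Hm Hg Ho ltac:(lia)).
  replace (q - p - r + 1)%nat with (s + 1)%nat in HI0 by lia.
  assert (Hdd0 := d_ge_len x m p q Hm ltac:(lia)).
  eapply Rle_trans.
  apply (APL k s e phi om (x m - x 0%nat) (x q - x p) (dpq x (m - 1) p q) (Dp x (m - 1) p q) (Lambda_r x m r om) (Cb k));
    auto; try lra.
  -
    intros He1 HaL.
    assert (Hb'a : x q - x p <= Rmin (dpq x (m - 1) p q) (x m - x 0%nat)) by (apply Rmin_glb; lra).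
    assert (Hb'b := Rmin_l (dpq x (m - 1) p q) (x m - x 0%nat)).
    assert (Hb'L := Rmin_r (dpq x (m - 1) p q) (x m - x 0%nat)).
    destruct (Rle_dec (Rmin (dpq x (m - 1) p q) (x m - x 0%nat)) (dpq x m p q)) as [Hn|Hx].
    + split.
      * eapply Rle_trans. apply RInt_w_sub with (a := x q - x p) (b := dpq x m p q); auto; lra.
        eapply Rle_trans. exact HI0. rewrite HD0.
        assert (0 <= Dp x (m - 1) p q * Lambda_r x m r om) by (apply Rmult_le_pos; lra).
        replace (Cb k * (x m - x 0%nat) * Dp x (m - 1) p q * Lambda_r x m r om)
          with (Cb k * (x m - x 0%nat) * (Dp x (m - 1) p q * Lambda_r x m r om)) by ring.
        replace (Dp x (m - 1) p q * (x m - x p) * Lambda_r x m r om)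
          with ((x m - x p) * (Dp x (m - 1) p q * Lambda_r x m r om)) by ring.
        apply Rmult_le_compat_r; auto. nra.
      * assert (HK := Kbound k r m x om Hmk Hm Hg Ho (S e) p q (Rmin (dpq x (m - 1) p q) (x m - x 0%nat)) ltac:(lia) ltac:(lia) ltac:(lra)).
        set (b' := Rmin (dpq x (m - 1) p q) (x m - x 0%nat)) in *.
        set (F := RInt (fun v => / v ^ k * om v) b' (2 * (x m - x 0%nat))) in *.
        assert (HF0 : 0 <= F) by (apply RInt_w_nonneg; auto; lra).
        change (b' ^ S e) with (b' * b' ^ e) in HK.
        assert (Hb'0 : 0 < b') by lra.
        assert (HK' : b' ^ e * F <= Kc (S e) * Dp x m p q * Lambda_r x m r om).
        { apply Rmult_le_reg_l with b'; auto. lra. }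
        rewrite HD0 in HK'.
        assert (0 <= Dp x (m - 1) p q * Lambda_r x m r om) by (apply Rmult_le_pos; lra).
        assert (0 < Kc (S e)) by apply Kc_pos.
        eapply Rle_trans. exact HK'.
        replace (Kc (S e) * (Dp x (m - 1) p q * (x m - x p)) * Lambda_r x m r om)
          with (Kc (S e) * (x m - x p) * (Dp x (m - 1) p q * Lambda_r x m r om)) by ring.
        replace (Cb k * (x m - x 0%nat) * Dp x (m - 1) p q * Lambda_r x m r om)
          with (Cb k * (x m - x 0%nat) * (Dp x (m - 1) p q * Lambda_r x m r om)) by ring.
        assert (x p <= x m) by (apply (mono_le x m); auto; lia).
        apply Rmult_le_compat_r; auto. apply Rmult_le_compat; lra.
    + apply Rnot_le_lt in Hx.
      destruct (Nat.eq_dec q (m - 1)) as [Eq|Nq].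
      2:{ exfalso. assert (dpq x (m - 1) p q <= dpq x m p q).
          { unfold dpq. rewrite !y_next_eq by lia. apply Rmin_glb. apply Rmin_l.
            eapply Rle_trans. apply Rmin_r. destruct p; simpl y_prev; [|lra].
            assert (x (m - 1)%nat <= x m) by (apply (mono_le x m); auto; lia). lra. }
          lra. }
      subst q. destruct p as [|p0]. lia.
      assert (Hd0 : dpq x m (S p0) (m - 1) = Rmin (x m - x (S p0)) (x (m - 1)%nat - x p0)).
      { unfold dpq. rewrite y_next_eq by lia. replace (S (m - 1)) with m by lia. reflexivity. }
      assert (Hb : dpq x (m - 1) (S p0) (m - 1) <= x (m - 1)%nat - x p0) by (unfold dpq; apply Rmin_r).
      set (b' := Rmin (dpq x (m - 1) (S p0) (m - 1)) (x m - x 0%nat)) in *.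
      assert (Hc1 : x m - x (S p0) < b').
      { destruct (Rlt_le_dec (x m - x (S p0)) b') as [Hlt|Hge]; [exact Hlt|]. exfalso.
        rewrite Hd0 in Hx. assert (Rmin (x m - x (S p0)) (x (m - 1)%nat - x p0) >= b'). 
        { apply Rle_ge, Rmin_glb; lra. } lra. }
      assert (Hd0' : dpq x m (S p0) (m - 1) = x m - x (S p0)) by (rewrite Hd0; apply Rmin_left; lra).
      assert (Hd1 : x (m - 1)%nat - x p0 <= dpq x m (S p0) m).
      { unfold dpq. rewrite y_next_n. simpl y_prev. apply Rmin_glb.
        assert (x (S p0) <= x m) by (apply (mono_le x m); auto; lia).
        assert (x 0%nat <= x p0) by (apply (mono_le x m); auto; lia).
        assert (x (m - 1)%nat <= x m) by (apply (mono_le x m); auto; lia). lra.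
        assert (x (m - 1)%nat <= x m) by (apply (mono_le x m); auto; lia). lra. }
      assert (He' : e = S p0) by lia.
      assert (HD1 : Dp x m (S p0) m <= 2 ^ e * Dp x (m - 1) (S p0) (m - 1)).
      { rewrite !Dp_full, He'. rewrite <- (length_seq (S p0) 0) at 2.
        apply prod_le2. intros i Hi. apply in_seq in Hi.
        assert (x i <= x p0) by (apply (mono_le x m); auto; lia).
        assert (x (m - 1)%nat <= x m) by (apply (mono_le x m); auto; lia).
        assert (x p0 <= x (m - 1)%nat) by (apply (mono_le x m); auto; lia).
        assert (x (S p0) <= x (m - 1)%nat) by (apply (mono_le x m); auto; lia). lra. }
      assert (HI1 := Lam_int_bound x m r om (S p0) m Hm Hg Ho ltac:(lia)).
      replace (m - S p0 - r + 1)%nat with (s + 2)%nat in HI1 by lia.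
      assert (Hpe : 0 < 2 ^ e) by (apply pow_lt; lra).
      assert (HDL : 0 <= Dp x (m - 1) (S p0) (m - 1) * Lambda_r x m r om) by (apply Rmult_le_pos; lra).
      split.
      * assert (Hax : x (m - 1)%nat - x (S p0) <= x m - x (S p0)) by (assert (x (m - 1)%nat <= x m) by (apply (mono_le x m); auto; lia); lra).
        rewrite (RInt_w_chasles (s + 1) om (x (m - 1)%nat - x (S p0)) (x m - x (S p0)) b') by (auto; lra).
        assert (P1 : RInt (fun v => / v ^ (s + 1) * om v) (x (m - 1)%nat - x (S p0)) (x m - x (S p0))
                     <= (x m - x 0%nat) * (Dp x (m - 1) (S p0) (m - 1) * Lambda_r x m r om)).
        { rewrite <- Hd0'. eapply Rle_trans. exact HI0. rewrite HD0.
          replace (Dp x (m - 1) (S p0) (m - 1) * (x m - x (S p0)) * Lambda_r x m r om)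
            with ((x m - x (S p0)) * (Dp x (m - 1) (S p0) (m - 1) * Lambda_r x m r om)) by ring.
          apply Rmult_le_compat_r; auto. }
        assert (P2 : RInt (fun v => / v ^ (s + 1) * om v) (x m - x (S p0)) b'
                     <= b' * RInt (fun v => / v ^ (s + 2) * om v) (x m - x (S p0)) b').
        { apply RInt_w_cmp; auto; try lra. intros v Hv.
          replace (s + 2)%nat with (s + 1 + 1)%nat by lia. rewrite (pow_add v (s + 1) 1), pow_1, Rinv_mult.
          assert (0 < / v ^ (s + 1)) by (apply Rinv_0_lt_compat, pow_lt; lra).
          assert (Hbv : 1 <= b' * / v).
          { rewrite <- (Rinv_r v) by lra. apply Rmult_le_compat_r. left; apply Rinv_0_lt_compat; lra. lra. }
          replace (b' * (/ v ^ (s + 1) * / v)) with (/ v ^ (s + 1) * (b' * / v)) by ring.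
          rewrite <- (Rmult_1_r (/ v ^ (s + 1))) at 1. apply Rmult_le_compat_l; lra. }
        assert (P3 : RInt (fun v => / v ^ (s + 2) * om v) (x m - x (S p0)) b'
                     <= Dp x m (S p0) m * Lambda_r x m r om).
        { eapply Rle_trans. apply RInt_w_sub with (a := x m - x (S p0)) (b := dpq x m (S p0) m); auto; lra. exact HI1. }
        assert (P4 : 0 <= RInt (fun v => / v ^ (s + 2) * om v) (x m - x (S p0)) b') by (apply RInt_w_nonneg; auto; lra).
        assert (P5 : b' * RInt (fun v => / v ^ (s + 2) * om v) (x m - x (S p0)) b' <= (2 * (x m - x 0%nat)) * (2 ^ e * (Dp x (m - 1) (S p0) (m - 1) * Lambda_r x m r om))).
        { apply Rmult_le_compat; try lra. eapply Rle_trans. exact P3.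
          rewrite <- Rmult_assoc. apply Rmult_le_compat_r; lra. }
        replace (Cb k * (x m - x 0%nat) * Dp x (m - 1) (S p0) (m - 1) * Lambda_r x m r om)
          with (Cb k * (x m - x 0%nat) * (Dp x (m - 1) (S p0) (m - 1) * Lambda_r x m r om)) by ring.
        rewrite pow_add in C4. simpl (2 ^ 1) in C4.
        assert (Cb k * (x m - x 0%nat) >= (1 + 2 ^ e * (2 * 1)) * (x m - x 0%nat)) by nra.
        nra.
      * assert (HK := Kbound k r m x om Hmk Hm Hg Ho e (S p0) m b' ltac:(lia) ltac:(lia) ltac:(lra)).
        set (F := RInt (fun v => / v ^ k * om v) b' (2 * (x m - x 0%nat))) in *.
        assert (0 < Kc e) by apply Kc_pos.
        eapply Rle_trans. exact HK.
        rewrite pow_add in C3. simpl (2 ^ 1) in C3.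
        replace (Cb k * (x m - x 0%nat) * Dp x (m - 1) (S p0) (m - 1) * Lambda_r x m r om)
          with (Cb k * (x m - x 0%nat) * (Dp x (m - 1) (S p0) (m - 1) * Lambda_r x m r om)) by ring.
        assert (Kc e * b' * Dp x m (S p0) m * Lambda_r x m r om <= Kc e * (2 * (x m - x 0%nat)) * (2 ^ e * (Dp x (m - 1) (S p0) (m - 1) * Lambda_r x m r om))).
        { assert (Q1 : Dp x m (S p0) m * Lambda_r x m r om <= 2 ^ e * (Dp x (m - 1) (S p0) (m - 1) * Lambda_r x m r om)).
          { rewrite <- Rmult_assoc. apply Rmult_le_compat_r; lra. }
          assert (Q2 : 0 <= Dp x m (S p0) m * Lambda_r x m r om).
          { apply Rmult_le_pos. left; apply Dp_pos with r; auto; lia. lra. }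
          replace (Kc e * b' * Dp x m (S p0) m * Lambda_r x m r om) with (Kc e * (b' * (Dp x m (S p0) m * Lambda_r x m r om))) by ring.
          rewrite (Rmult_assoc (Kc e)). apply Rmult_le_compat_l. lra.
          apply Rmult_le_compat; lra. }
        eapply Rle_trans. eassumption.
        assert (0 <= (x m - x 0%nat) * (Dp x (m - 1) (S p0) (m - 1) * Lambda_r x m r om)) by (apply Rmult_le_pos; lra).
        replace (Kc e * (2 * (x m - x 0%nat)) * (2 ^ e * (Dp x (m - 1) (S p0) (m - 1) * Lambda_r x m r om)))
          with ((2 ^ e * 2 * Kc e) * ((x m - x 0%nat) * (Dp x (m - 1) (S p0) (m - 1) * Lambda_r x m r om))) by ring.
        rewrite (Rmult_assoc (Cb k)). apply Rmult_le_compat_r; auto. lra.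
  -
    intros He0. assert (p = 0%nat /\ q = (m - 1)%nat) as [-> ->] by lia.
    split.
    + unfold dpq. eapply Rle_trans. apply Rmin_l. rewrite y_next_n. lra.
    + intros HaL.
      assert (HK := Kbound k r m x om Hmk Hm Hg Ho 1 0 (m - 1) (x (m - 1)%nat - x 0%nat) ltac:(lia) ltac:(lia) ltac:(split; [lra| apply d_ge_len; auto; lia])).
      assert (HDm : Dp x m 0 (m - 1) = x m - x 0%nat).
      { rewrite Dp_last by lia. unfold Dp. replace (m - 1 - (m - 1))%nat with 0%nat by lia. unfold prodl; simpl. ring. }
      rewrite HDm, pow_1 in HK.
      assert (0 < Kc 1) by apply Kc_pos.
      destruct (Cb_facts k 1 ltac:(lia)) as (_ & C6 & _ & _).
      apply Rmult_le_reg_l with (x (m - 1)%nat - x 0%nat). lra.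
      eapply Rle_trans. exact HK.
      assert (0 <= (x m - x 0%nat) * Lambda_r x m r om) by (apply Rmult_le_pos; lra).
      replace (Kc 1 * (x (m - 1)%nat - x 0%nat) * (x m - x 0%nat) * Lambda_r x m r om) with
        ((x (m - 1)%nat - x 0%nat) * (Kc 1 * ((x m - x 0%nat) * Lambda_r x m r om))) by ring.
      replace ((x (m - 1)%nat - x 0%nat) * (Cb k * (x m - x 0%nat) * Lambda_r x m r om)) with
        ((x (m - 1)%nat - x 0%nat) * (Cb k * ((x m - x 0%nat) * Lambda_r x m r om))) by ring.
      apply Rmult_le_compat_l. lra. apply Rmult_le_compat_r; lra.
  - apply final_const; [lia|lra|lra|reflexivity].
Qed.

Lemma Dy_ge y n p q : mono y n -> (p <= q <= n)%nat ->
  dpq y n p q ^ (p + (n - q)) <= Dp y n p q.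
Proof.
  intros Hm Hpq. unfold Dp. rewrite pow_add.
  assert (Hb0 : 0 <= dpq y n p q).
  { eapply Rle_trans; [|apply d_ge_len; auto]. assert (y p <= y q) by (apply (mono_le y n); auto; lia). lra. }
  assert (HA := prod_ge (fun i => y q - y i) (seq 0 p) (dpq y n p q) Hb0).
  assert (HB := prod_ge (fun i => y i - y p) (seq (S q) (n - q)) (dpq y n p q) Hb0).
  rewrite length_seq in HA, HB.
  apply Rmult_le_compat; try (apply pow_le; lra).
  - apply HA. intros i Hi. apply in_seq in Hi. destruct p as [|p0]. lia.
    eapply Rle_trans. unfold dpq. apply Rmin_r. simpl y_prev.
    assert (y i <= y p0) by (apply (mono_le y n); auto; lia). lra.
  - apply HB. intros i Hi. apply in_seq in Hi.
    eapply Rle_trans. unfold dpq. apply Rmin_l. rewrite y_next_eq by lia.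
    assert (y (S q) <= y i) by (apply (mono_le y n); auto; lia). lra.
Qed.

Lemma Dp_first x m p q : (q <= m - 1)%nat ->
  Dp x m (S p) (S q) = (x (S q) - x 0%nat) * Dp (fun i => x (S i)) (m - 1) p q.
Proof.
  intros H. unfold Dp. rewrite <- cons_seq. simpl map.
  replace (m - S q)%nat with (m - 1 - q)%nat by lia.
  rewrite (map_seq_shift (fun i => x i - x (S p)) (S q)).
  rewrite <- (seq_shift p 0), map_map.
  unfold prodl at 1. simpl fold_right. fold (prodl (map (fun x0 : nat => x (S q) - x (S x0)) (seq 0 p))).
  ring.
Qed.

Lemma mono_shift x m : mono x m -> mono (fun i => x (S i)) (m - 1).
Proof. intros H i Hi. apply H. lia. Qed.

Lemma claim2 k r m x phi om p q :
  (2 <= k)%nat -> m = (r + k)%nat -> mono x m -> gapc x m r -> inPhi phi -> inPhi om ->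
  (forall t, 0 < t <= x m - x 0%nat -> phi t <= t ^ (k - 1) * RInt (fun u => / u ^ k * om u) t (2 * (x m - x 0%nat))) ->
  (forall t, x m - x 0%nat <= t <= 2 * (x m - x 0%nat) -> phi t <= om t) ->
  (p <= m - 1 /\ q <= m - 1 /\ p + r + 1 <= q)%nat ->
  Lambda_pqr (fun i => x (S i)) (m - 1) p q r phi <= cst k * (x m - x 0%nat) * Lambda_r x m r om.
Proof.
  intros Hk Hmk Hm Hg Hp Ho Hphi1 Hphi2 Hpq.
  set (y := fun i => x (S i)).
  assert (HL : 0 < x m - x 0%nat) by (assert (x 0%nat < x m) by (apply (gap_lt x m r); auto; lia); lra).
  assert (Hmy : mono y (m - 1)) by (apply mono_shift; auto).
  assert (Ha : 0 < y q - y p) by (unfold y; assert (x (S p) < x (S q)) by (apply (gap_lt x m r); auto; lia); lra).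
  assert (Hab : y q - y p <= dpq y (m - 1) p q) by (apply d_ge_len; auto; lia).
  assert (Hb2 : dpq y (m - 1) p q <= 2 * (x m - x 0%nat)).
  { eapply Rle_trans. apply d_le_2L; auto; lia. unfold y. replace (S (m - 1)) with m by lia.
    assert (x 0%nat <= x 1%nat) by (apply (mono_le x m); auto; lia). lra. }
  rewrite Lpqr_eq by (auto; lia).
  assert (HLn := Lambda_nonneg x m r om).
  assert (HLt := Lam_top x m r k om ltac:(lia) Hmk Hm Hg Ho).
  remember (q - p - r)%nat as s eqn:Hs.
  remember (p + (m - 1 - q))%nat as e eqn:He.
  replace (q - p - r + 1)%nat with (s + 1)%nat by lia.
  assert (Hkse : k = (s + 1 + e)%nat) by lia.
  destruct (Cb_facts k e ltac:(lia)) as (C1 & C2 & C3 & C4).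
  destruct (Cb_facts k (S e) ltac:(lia)) as (_ & C5 & _ & _).
  assert (Hxp : x (S q) - x 0%nat <= x m - x 0%nat) by (assert (x (S q) <= x m) by (apply (mono_le x m); auto; lia); lra).
  assert (HDy : dpq y (m - 1) p q ^ e <= Dp y (m - 1) p q) by (rewrite He; apply Dy_ge; auto; lia).
  assert (HD0 : Dp x m (S p) (S q) = Dp y (m - 1) p q * (x (S q) - x 0%nat)) by (rewrite Dp_first by lia; unfold y; ring).
  assert (HDy0 : 0 < Dp y (m - 1) p q) by (apply Rlt_le_trans with (dpq y (m - 1) p q ^ e); [apply pow_lt; lra| exact HDy]).
  assert (HI0 := Lam_int_bound x m r om (S p) (S q) Hm Hg Ho ltac:(lia)).
  replace (S q - S p - r + 1)%nat with (s + 1)%nat in HI0 by lia.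
  assert (Hdd0 := d_ge_len x m (S p) (S q) Hm ltac:(lia)).
  assert (Hyq : y q - y p = x (S q) - x (S p)) by reflexivity.
  eapply Rle_trans.
  apply (APL k s e phi om (x m - x 0%nat) (y q - y p) (dpq y (m - 1) p q) (Dp y (m - 1) p q) (Lambda_r x m r om) (Cb k));
    auto; try lra.
  -
    intros He1 HaL. rewrite Hyq in *.
    assert (Hb'a : x (S q) - x (S p) <= Rmin (dpq y (m - 1) p q) (x m - x 0%nat)) by (apply Rmin_glb; lra).
    assert (Hb'b := Rmin_l (dpq y (m - 1) p q) (x m - x 0%nat)).
    assert (Hb'L := Rmin_r (dpq y (m - 1) p q) (x m - x 0%nat)).
    destruct (Rle_dec (Rmin (dpq y (m - 1) p q) (x m - x 0%nat)) (dpq x m (S p) (S q))) as [Hn|Hx].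
    + split.
      * eapply Rle_trans. apply RInt_w_sub with (a := x (S q) - x (S p)) (b := dpq x m (S p) (S q)); auto; lra.
        eapply Rle_trans. exact HI0. rewrite HD0.
        assert (0 <= Dp y (m - 1) p q * Lambda_r x m r om) by (apply Rmult_le_pos; lra).
        replace (Cb k * (x m - x 0%nat) * Dp y (m - 1) p q * Lambda_r x m r om)
          with (Cb k * (x m - x 0%nat) * (Dp y (m - 1) p q * Lambda_r x m r om)) by ring.
        replace (Dp y (m - 1) p q * (x (S q) - x 0%nat) * Lambda_r x m r om)
          with ((x (S q) - x 0%nat) * (Dp y (m - 1) p q * Lambda_r x m r om)) by ring.
        apply Rmult_le_compat_r; auto. nra.
      * assert (HK := Kbound k r m x om Hmk Hm Hg Ho (S e) (S p) (S q) (Rmin (dpq y (m - 1) p q) (x m - x 0%nat)) ltac:(lia) ltac:(lia) ltac:(lra)).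
        set (b' := Rmin (dpq y (m - 1) p q) (x m - x 0%nat)) in *.
        set (F := RInt (fun v => / v ^ k * om v) b' (2 * (x m - x 0%nat))) in *.
        assert (HF0 : 0 <= F) by (apply RInt_w_nonneg; auto; lra).
        change (b' ^ S e) with (b' * b' ^ e) in HK.
        assert (Hb'0 : 0 < b') by lra.
        assert (HK' : b' ^ e * F <= Kc (S e) * Dp x m (S p) (S q) * Lambda_r x m r om).
        { apply Rmult_le_reg_l with b'; auto. lra. }
        rewrite HD0 in HK'.
        assert (0 <= Dp y (m - 1) p q * Lambda_r x m r om) by (apply Rmult_le_pos; lra).
        assert (0 < Kc (S e)) by apply Kc_pos.
        eapply Rle_trans. exact HK'.
        replace (Kc (S e) * (Dp y (m - 1) p q * (x (S q) - x 0%nat)) * Lambda_r x m r om)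
          with (Kc (S e) * (x (S q) - x 0%nat) * (Dp y (m - 1) p q * Lambda_r x m r om)) by ring.
        replace (Cb k * (x m - x 0%nat) * Dp y (m - 1) p q * Lambda_r x m r om)
          with (Cb k * (x m - x 0%nat) * (Dp y (m - 1) p q * Lambda_r x m r om)) by ring.
        assert (x 0%nat <= x (S q)) by (apply (mono_le x m); auto; lia).
        apply Rmult_le_compat_r; auto. apply Rmult_le_compat; lra.
    + apply Rnot_le_lt in Hx.
      destruct p as [|p0].
      2:{ exfalso. assert (dpq y (m - 1) (S p0) q <= dpq x m (S (S p0)) (S q)).
          { unfold dpq. simpl y_prev. unfold y. apply Rmin_glb; [|apply Rmin_r].
            eapply Rle_trans. apply Rmin_l.
            destruct (Nat.eq_dec q (m - 1)) as [Eq|Nq].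
            - subst q. rewrite y_next_n. replace (S (m - 1)) with m by lia. rewrite y_next_n.
              assert (x 0%nat <= x 1%nat) by (apply (mono_le x m); auto; lia). lra.
            - rewrite !y_next_eq by lia. lra. }
          lra. }
      destruct (Nat.eq_dec q (m - 1)) as [Eq|Nq]. lia.
      assert (Hd0 : dpq x m 1 (S q) = Rmin (x (S (S q)) - x 1%nat) (x (S q) - x 0%nat)).
      { unfold dpq. rewrite y_next_eq by lia. reflexivity. }
      assert (Hb : dpq y (m - 1) 0 q <= x (S (S q)) - x 1%nat).
      { unfold dpq. eapply Rle_trans. apply Rmin_l. rewrite y_next_eq by lia. unfold y. lra. }
      assert (Hb2' : dpq y (m - 1) 0 q <= x (S q) - x 0%nat + (x m - x 0%nat)).
      { unfold dpq. eapply Rle_trans. apply Rmin_r. simpl y_prev. unfold y. replace (S (m - 1)) with m by lia.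
        assert (x 0%nat <= x 1%nat) by (apply (mono_le x m); auto; lia). lra. }
      set (b' := Rmin (dpq y (m - 1) 0 q) (x m - x 0%nat)) in *.
      assert (Hc1 : x (S q) - x 0%nat < b').
      { destruct (Rlt_le_dec (x (S q) - x 0%nat) b') as [Hlt|Hge]; [exact Hlt|]. exfalso.
        rewrite Hd0 in Hx. assert (Rmin (x (S (S q)) - x 1%nat) (x (S q) - x 0%nat) >= b').
        { apply Rle_ge, Rmin_glb; lra. } lra. }
      assert (Hd0' : dpq x m 1 (S q) = x (S q) - x 0%nat) by (rewrite Hd0; apply Rmin_right; lra).
      assert (Hd1 : b' <= dpq x m 0 (S q)).
      { unfold dpq. rewrite y_next_eq by lia. simpl y_prev. apply Rmin_glb.
        assert (x 0%nat <= x 1%nat) by (apply (mono_le x m); auto; lia). lra. lra. }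
      assert (He' : e = (m - 1 - q)%nat) by lia.
      assert (HD1 : Dp x m 0 (S q) <= 2 ^ e * Dp y (m - 1) 0 q).
      { unfold Dp. simpl seq. simpl map. unfold prodl at 1 3. simpl fold_right. rewrite !Rmult_1_l.
        replace (m - S q)%nat with (m - 1 - q)%nat by lia.
        rewrite (map_seq_shift (fun i => x i - x 0%nat) (S q)).
        rewrite He'. rewrite <- (length_seq (m - 1 - q) (S q)) at 2.
        apply prod_le2. intros i Hi. apply in_seq in Hi. unfold y.
        assert (x 0%nat <= x 1%nat) by (apply (mono_le x m); auto; lia).
        assert (x (S (S q)) <= x (S i)) by (apply (mono_le x m); auto; lia). lra. }
      assert (HI1 := Lam_int_bound x m r om 0 (S q) Hm Hg Ho ltac:(lia)).
      replace (S q - 0 - r + 1)%nat with (s + 2)%nat in HI1 by lia.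
      assert (Hpe : 0 < 2 ^ e) by (apply pow_lt; lra).
      assert (HDL : 0 <= Dp y (m - 1) 0 q * Lambda_r x m r om) by (apply Rmult_le_pos; lra).
      split.
      * assert (Hax : x (S q) - x 1%nat <= x (S q) - x 0%nat) by (assert (x 0%nat <= x 1%nat) by (apply (mono_le x m); auto; lia); lra).
        rewrite (RInt_w_chasles (s + 1) om (x (S q) - x 1%nat) (x (S q) - x 0%nat) b') by (auto; lra).
        assert (P1 : RInt (fun v => / v ^ (s + 1) * om v) (x (S q) - x 1%nat) (x (S q) - x 0%nat)
                     <= (x m - x 0%nat) * (Dp y (m - 1) 0 q * Lambda_r x m r om)).
        { rewrite <- Hd0'. eapply Rle_trans. exact HI0. rewrite HD0.
          replace (Dp y (m - 1) 0 q * (x (S q) - x 0%nat) * Lambda_r x m r om)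
            with ((x (S q) - x 0%nat) * (Dp y (m - 1) 0 q * Lambda_r x m r om)) by ring.
          apply Rmult_le_compat_r; auto. }
        assert (P2 : RInt (fun v => / v ^ (s + 1) * om v) (x (S q) - x 0%nat) b'
                     <= b' * RInt (fun v => / v ^ (s + 2) * om v) (x (S q) - x 0%nat) b').
        { apply RInt_w_cmp; auto; try lra. intros v Hv.
          replace (s + 2)%nat with (s + 1 + 1)%nat by lia. rewrite (pow_add v (s + 1) 1), pow_1, Rinv_mult.
          assert (0 < / v ^ (s + 1)) by (apply Rinv_0_lt_compat, pow_lt; lra).
          assert (Hbv : 1 <= b' * / v).
          { rewrite <- (Rinv_r v) by lra. apply Rmult_le_compat_r. left; apply Rinv_0_lt_compat; lra. lra. }
          replace (b' * (/ v ^ (s + 1) * / v)) with (/ v ^ (s + 1) * (b' * / v)) by ring.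
          rewrite <- (Rmult_1_r (/ v ^ (s + 1))) at 1. apply Rmult_le_compat_l; lra. }
        assert (P3 : RInt (fun v => / v ^ (s + 2) * om v) (x (S q) - x 0%nat) b'
                     <= Dp x m 0 (S q) * Lambda_r x m r om).
        { eapply Rle_trans. apply RInt_w_sub with (a := x (S q) - x 0%nat) (b := dpq x m 0 (S q)); auto; lra. exact HI1. }
        assert (P4 : 0 <= RInt (fun v => / v ^ (s + 2) * om v) (x (S q) - x 0%nat) b') by (apply RInt_w_nonneg; auto; lra).
        assert (P5 : b' * RInt (fun v => / v ^ (s + 2) * om v) (x (S q) - x 0%nat) b' <= (2 * (x m - x 0%nat)) * (2 ^ e * (Dp y (m - 1) 0 q * Lambda_r x m r om))).
        { apply Rmult_le_compat; try lra. eapply Rle_trans. exact P3.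
          rewrite <- Rmult_assoc. apply Rmult_le_compat_r; lra. }
        replace (Cb k * (x m - x 0%nat) * Dp y (m - 1) 0 q * Lambda_r x m r om)
          with (Cb k * (x m - x 0%nat) * (Dp y (m - 1) 0 q * Lambda_r x m r om)) by ring.
        rewrite pow_add in C4. simpl (2 ^ 1) in C4.
        assert (Cb k * (x m - x 0%nat) >= (1 + 2 ^ e * (2 * 1)) * (x m - x 0%nat)) by nra.
        nra.
      * assert (HK := Kbound k r m x om Hmk Hm Hg Ho e 0 (S q) b' ltac:(lia) ltac:(lia) ltac:(lra)).
        set (F := RInt (fun v => / v ^ k * om v) b' (2 * (x m - x 0%nat))) in *.
        assert (0 < Kc e) by apply Kc_pos.
        rewrite pow_add in C3. simpl (2 ^ 1) in C3.
        replace (Cb k * (x m - x 0%nat) * Dp y (m - 1) 0 q * Lambda_r x m r om)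
          with (Cb k * (x m - x 0%nat) * (Dp y (m - 1) 0 q * Lambda_r x m r om)) by ring.
        assert (Kc e * b' * Dp x m 0 (S q) * Lambda_r x m r om <= Kc e * (2 * (x m - x 0%nat)) * (2 ^ e * (Dp y (m - 1) 0 q * Lambda_r x m r om))).
        { assert (Q1 : Dp x m 0 (S q) * Lambda_r x m r om <= 2 ^ e * (Dp y (m - 1) 0 q * Lambda_r x m r om)).
          { rewrite <- Rmult_assoc. apply Rmult_le_compat_r; lra. }
          assert (Q2 : 0 <= Dp x m 0 (S q) * Lambda_r x m r om).
          { apply Rmult_le_pos. left; apply Dp_pos with r; auto; lia. lra. }
          replace (Kc e * b' * Dp x m 0 (S q) * Lambda_r x m r om) with (Kc e * (b' * (Dp x m 0 (S q) * Lambda_r x m r om))) by ring.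
          rewrite (Rmult_assoc (Kc e)). apply Rmult_le_compat_l. lra.
          apply Rmult_le_compat; lra. }
        eapply Rle_trans. exact HK. eapply Rle_trans. eassumption.
        assert (0 <= (x m - x 0%nat) * (Dp y (m - 1) 0 q * Lambda_r x m r om)) by (apply Rmult_le_pos; lra).
        replace (Kc e * (2 * (x m - x 0%nat)) * (2 ^ e * (Dp y (m - 1) 0 q * Lambda_r x m r om)))
          with ((2 ^ e * 2 * Kc e) * ((x m - x 0%nat) * (Dp y (m - 1) 0 q * Lambda_r x m r om))) by ring.
        rewrite (Rmult_assoc (Cb k)). apply Rmult_le_compat_r; auto. lra.
  -
    intros He0. assert (p = 0%nat /\ q = (m - 1)%nat) as [-> ->] by lia.
    split.
    + unfold dpq. eapply Rle_trans. apply Rmin_l. rewrite y_next_n. lra.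
    + intros HaL. rewrite Hyq in *. unfold y in *. replace (S (m - 1)) with m in * by lia.
      assert (HK := Kbound k r m x om Hmk Hm Hg Ho 1 1 m (x m - x 1%nat) ltac:(lia) ltac:(lia) ltac:(split; [lra| apply d_ge_len; auto; lia])).
      assert (HDm : Dp x m 1 m = x m - x 0%nat).
      { rewrite Dp_full. unfold prodl; simpl. ring. }
      rewrite HDm, pow_1 in HK.
      assert (0 < Kc 1) by apply Kc_pos.
      destruct (Cb_facts k 1 ltac:(lia)) as (_ & C6 & _ & _).
      apply Rmult_le_reg_l with (x m - x 1%nat). lra.
      eapply Rle_trans. exact HK.
      assert (0 <= (x m - x 0%nat) * Lambda_r x m r om) by (apply Rmult_le_pos; lra).
      replace (Kc 1 * (x m - x 1%nat) * (x m - x 0%nat) * Lambda_r x m r om) with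
        ((x m - x 1%nat) * (Kc 1 * ((x m - x 0%nat) * Lambda_r x m r om))) by ring.
      replace ((x m - x 1%nat) * (Cb k * (x m - x 0%nat) * Lambda_r x m r om)) with
        ((x m - x 1%nat) * (Cb k * ((x m - x 0%nat) * Lambda_r x m r om))) by ring.
      apply Rmult_le_compat_l. lra. apply Rmult_le_compat_r; lra.
  - apply final_const; [lia|lra|lra|reflexivity].
Qed.

Theorem lemma3p3 :
  forall k : nat, (2 <= k)%nat ->
  exists c : R,
  forall (r m : nat) (x : nat -> R) (phi omega : R -> R),
    m = (r + k)%nat ->
    (forall i, (i < m)%nat -> x i <= x (S i)) ->
    (forall j, (j + r + 1 <= m)%nat -> x j < x (j + r + 1)%nat) ->
    inPhi phi -> inPhi omega ->
    (forall t, 0 < t <= (2 * (x m - x 0%nat)) / 2 ->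
       phi t <= t ^ (k - 1) *
                RInt (fun u => / u ^ k * omega u) t (2 * (x m - x 0%nat))) ->
    (forall t, (2 * (x m - x 0%nat)) / 2 <= t <= 2 * (x m - x 0%nat) ->
       phi t <= omega t) ->
    Lambda_r x (m - 1) r phi <= c * (x m - x 0%nat) * Lambda_r x m r omega /\
    Lambda_r (fun i => x (S i)) (m - 1) r phi
      <= c * (x m - x 0%nat) * Lambda_r x m r omega.
Proof.
  intros k Hk. exists (cst k).
  intros r m x phi om Hmk Hm Hg Hp Ho H1 H2.
  assert (Hm' : mono x m) by exact Hm.
  assert (Hg' : gapc x m r) by exact Hg.
  assert (E : 2 * (x m - x 0%nat) / 2 = x m - x 0%nat) by field.
  assert (H1' : forall t, 0 < t <= x m - x 0%nat -> phi t <= t ^ (k - 1) * RInt (fun u => / u ^ k * om u) t (2 * (x m - x 0%nat))).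
  { intros t Ht. apply H1. rewrite E. auto. }
  assert (H2' : forall t, x m - x 0%nat <= t <= 2 * (x m - x 0%nat) -> phi t <= om t).
  { intros t Ht. apply H2. rewrite E. auto. }
  assert (HL : 0 < x m - x 0%nat) by (assert (x 0%nat < x m) by (apply (gap_lt x m r); auto; lia); lra).
  assert (HLn := Lambda_nonneg x m r om).
  assert (Hc : 0 < cst k).
  { unfold cst, Cb. assert (0 < 2 ^ k) by (apply pow_lt; lra). assert (0 < 2 ^ (k + 1)) by (apply pow_lt; lra).
    assert (0 < Kc k) by apply Kc_pos. nra. }
  assert (HB : 0 <= cst k * (x m - x 0%nat) * Lambda_r x m r om) by (apply Rmult_le_pos; [apply Rmult_le_pos|]; lra).
  split; apply Lambda_le; auto; intros p q Hpq.
  - apply claim1; auto.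
  - apply claim2; auto.
Qed.
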